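(* Let $q=p^f$ with $p$ prime, and let $\mathbf{A}\in\mathrm{GL}_n(q)$, $n=q+1$, be the matrix defined in the context. Assume that $n=q+1=2^sr^t$ for some odd prime $r$ and integers $s,t\geqslant 0$. Then there exists a faithful $\langle\mathbf{A}\rangle$-irreducible linear $[n,2]_q$ code. If $q$ is a Mersenne prime, then $\mathbb{F}_q^n$ is a direct sum of faithful $\langle\mathbf{A}\rangle$-irreducible linear $[n,2]_q$ codes.
   Context: A linear $[n,k]_q$ code is a $k$-dimensional subspace of the row space $\mathbb{F}_q^n$. Write the multiplicative group $\mathbb{F}_q^*=\langle\eta,\lambda\rangle$ where $\lambda$ has odd order and $\eta$ has order a power of $2$. Let $\mathbf{D}=\mathrm{diag}(\eta\lambda,\lambda,\eta\lambda,\ldots,\eta\lambda)$ ($n\times n$; first entry $\eta\lambda$, second entry $\lambda$, remaining $n-2$ entries $\eta\lambda$), $\mathbf{P}=\begin{pmatrix}\mathbf{0}' & \mathbf{I}_{n-1}\\ 1 & \mathbf{0}\end{pmatrix}$ (with $\mathbf{0}'$ the zero column of length $n-1$, $\mathbf{0}$ the zero row of length $n-1$), and $\mathbf{A}=\mathbf{D}\mathbf{P}$, acting on $\mathbb{F}_q^n$ by right multiplication. A code $\mathcal{C}$ is $\langle\mathbf{A}\rangle$-invariant if $\mathcal{C}\mathbf{A}\subseteq\mathcal{C}$; an $\langle\mathbf{A}\rangle$-invariant $[n,k]_q$ code is $\langle\mathbf{A}\rangle$-irreducible if it contains no $\langle\mathbf{A}\rangle$-invariant $[n,k']_q$ code with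 $1\leqslant k'<k$, and faithful if no nonidentity element of $\langle\mathbf{A}\rangle$ fixes it pointwise. *)

(* Defs.v *)
From HB Require Import structures.
From mathcomp Require Import all_boot all_order all_algebra all_fingroup all_field.
Set Implicit Arguments. Unset Strict Implicit. Unset Printing Implicit Defensive.
Import GRing.Theory.
Local Open Scope ring_scope.

(* Matrices of size m.+1 x m.+1 over a field F; codes are row spaces of
   square matrices (mxalgebra), acting by right multiplication. *)

Definition Dmat (F : fieldType) (m : nat) (eta lam : F) : 'M[F]_m.+1 :=
  diag_mx (\row_(i < m.+1) (if val i == 1%N then lam else eta * lam)).

(* P = [[0', I_{n-1}], [1, 0]] : row i has its 1 in column (i+1) mod n *)
Definition Pmat (F : fieldType) (m : nat) : 'M[F]_m.+1 :=
  \matrix_(i < m.+1, j < m.+1) (if val j == ((val i).+1 %% m.+1)%N then 1 else 0).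

Definition Amat (F : fieldType) (m : nat) (eta lam : F) : 'M[F]_m.+1 :=
  Dmat m eta lam *m Pmat F m.

Definition Ainvariant (F : fieldType) (m : nat) (A C : 'M[F]_m.+1) : Prop :=
  (C *m A <= C)%MS.

Definition Airreducible (F : fieldType) (m : nat) (A C : 'M[F]_m.+1) : Prop :=
  Ainvariant A C /\
  forall C' : 'M[F]_m.+1, (C' <= C)%MS -> Ainvariant A C' ->
    ~ (1 <= \rank C' < \rank C)%N.

Definition Afaithful (F : fieldType) (m : nat) (A C : 'M[F]_m.+1) : Prop :=
  forall k : nat, (forall v : 'rV[F]_m.+1, (v <= C)%MS -> v *m A ^+ k = v) ->
    A ^+ k = 1.

Definition mersenne_prime (q : nat) : Prop :=
  prime q /\ exists k : nat, q = (2 ^ k - 1)%N.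

(* Main.v *)
Require Import Defs.
From HB Require Import structures.
From mathcomp Require Import all_boot all_order all_algebra all_fingroup all_field.
From mathcomp Require Import all_solvable.
From mathcomp Require Import ring zify.
Import GRing.Theory.
Import VectorInternalTheory.
Local Open Scope ring_scope.

Lemma exists_irr2 (F : finFieldType) :
  exists h : {poly F}, [/\ irreducible_poly h, h \is monic & size h = 3%N].
Proof.
pose f := fun uv : F * F => (uv.1 + uv.2, uv.1 * uv.2).
have [[a b] abN] : exists ab : F * F, ab \notin codom f.
  apply/existsP; rewrite -negb_forall; apply/negP => /forallP Hall.
  have : #|[seq f x | x in predT]| == #|(predT : {pred F * F})|.
    by apply/eqP/eq_card => x; rewrite !inE; apply: Hall.
  move=> /image_injP inj.
  have := inj (0,1) (1,0) isT isT.
  rewrite /f /= addr0 add0r mulr0 mul0r => /(_ erefl) [] /eqP.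
  by rewrite eq_sym oner_eq0.
pose t : {poly F} := - a *: 'X + b%:P.
pose h : {poly F} := 'X^2 + t.
have hs : (size t < size ('X^2 : {poly F}))%N.
  rewrite size_polyXn ltnS; apply: leq_trans (size_polyD _ _) _.
  rewrite geq_max size_polyC (leq_trans (leq_b1 _)) // andbT; apply: leq_trans (size_scale_leq _ _) _.
  by rewrite size_polyX.
have sh : size h = 3%N by rewrite size_polyDl // size_polyXn.
have mh : h \is monic by rewrite monicE lead_coefDl // lead_coefXn.
have noroot : forall r, ~~ root h r.
  move=> r; apply/negP => hr; move: abN; rewrite codomE.
  have -> : (a, b) = f (r, a - r).
    move: hr; rewrite /root /h /t hornerD hornerXn hornerD hornerZ hornerX hornerC => /eqP hr.
    rewrite /f /= addrC subrK; congr (_, _).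
    apply/eqP; rewrite -subr_eq0 -hr; apply/eqP.

    ring.
  by move/negP; apply; apply: map_f; rewrite mem_enum.
exists h; split => //.
split; first by rewrite sh.
move=> q sq qh.
have hN0 : h != 0 by rewrite -size_poly_eq0 sh.
have qN0 : q != 0 by apply/eqP => q0; move: qh; rewrite q0 dvd0p (negPf hN0).
have := dvdp_leq hN0 qh; rewrite sh leq_eqVlt => /orP[/eqP sq3|sq3].
  by rewrite -dvdp_size_eqp // sq3 sh.
have s4 : (size h <= 4)%N by rewrite sh.
have s13 : (1 < size q < size h)%N.
  by rewrite sh sq3 andbT ltn_neqAle eq_sym sq lt0n size_poly_eq0 qN0.
have [r hr] := reducible_cubic_root s4 s13 qh.
by rewrite (negPf (noroot r)) in hr.
Qed.

Section Codes.
Variables (F : finFieldType) (h : {poly F}) (hI : monic_irreducible_poly h).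
Local Notation L := {poly %/ h with hI}.
Variables (m : nat) (eta lam : F).
Hypotheses (eta0 : eta != 0) (lam0 : lam != 0).
Variable j0 : 'I_(dim L).
Hypothesis hj0 : v2r (1:L) 0 j0 != 0.

Definition dd (i : nat) : F := if i == 1%N then lam else eta * lam.
Definition Dp (j : nat) : F := \prod_(i < j) dd i.
Definition cc := Dp m.+1.
Definition tau (z : L) : F := v2r z 0 j0.
Definition xx (al : L) (j : nat) : L := (Dp j)%:A / al ^+ j.
Definition phi (al z : L) : 'rV[F]_m.+1 := \row_(j < m.+1) tau (z * xx al j).
Definition Mx al : 'M[F]_(dim L, m.+1) := lin1_mx (fun u => phi al (r2v u)).
Definition Cd al : 'M[F]_m.+1 := <<Mx al>>%MS.

Local Notation A := (Amat m eta lam).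

Lemma fld1 (K : fieldType) (d z P a : K) (k : nat) : a != 0 ->
  d * (z * (P / a^+k)) = z * a * (P * d / (a * a^+k)).
Proof. move=> a0; have ak : a ^+ k != 0 by rewrite expf_neq0. by field; rewrite ak a0. Qed.
Lemma fld2 (K : fieldType) (d z P a : K) (k : nat) : a ^+ k != 0 -> d * P = a * a ^+ k ->
  d * (z * (P / a ^+ k)) = z * a.
Proof. move=> ak e. transitivity (z * (d * P) / a ^+ k); first by field. rewrite e. by field. Qed.

Lemma algM (a b : F) : (a * b)%:A = a%:A * b%:A :> L.
Proof. by rewrite mulr_algl scalerA. Qed.

Lemma dd_neq0 i : dd i != 0.
Proof. by rewrite /dd; case: (i == 1%N); rewrite ?mulf_neq0. Qed.

Lemma Dp_neq0 j : Dp j != 0.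
Proof. rewrite /Dp. apply/prodf_neq0. move=> i _. exact: dd_neq0. Qed.

Lemma tauD a z w : tau (a *: z + w) = a * tau z + tau w.
Proof. by rewrite /tau linearP !mxE. Qed.

Lemma tauZ a z : tau (a *: z) = a * tau z.
Proof. by rewrite -[a *: z]addr0 tauD /tau linear0 mxE addr0. Qed.

Lemma tau0 : tau 0 = 0.
Proof. by rewrite /tau linear0 mxE. Qed.

Lemma tau_nondeg y : (forall z, tau (z * y) = 0) -> y = 0.
Proof.
move=> H; apply/eqP; apply/negPn/negP => y0.
by move: (H y^-1); rewrite mulVf // => /eqP; rewrite (negPf hj0).
Qed.

Lemma phi_lin al a z w : phi al (a *: z + w) = a *: phi al z + phi al w.
Proof. by apply/rowP => j; rewrite !mxE mulrDl -scalerAl tauD. Qed.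

Lemma phi0 al : phi al 0 = 0.
Proof. by apply/rowP => j; rewrite !mxE mul0r tau0. Qed.

Lemma phiZ al a z : phi al (a *: z) = a *: phi al z.
Proof. by rewrite -[a *: z]addr0 phi_lin phi0 addr0. Qed.

Lemma Mx_mul al u : u *m Mx al = phi al (r2v u).
Proof.
have lf : linear (fun u => phi al (r2v u)).
  by move=> a x y; rewrite linearP phi_lin.
pose g : {linear 'rV[F]_(dim L) -> 'rV[F]_m.+1} :=
  HB.pack (fun u => phi al (r2v u)) (GRing.isLinear.Build _ _ _ _ _ lf).
exact: (mul_rV_lin1 g u).
Qed.

Lemma phi_sub al z : (phi al z <= Mx al)%MS.
Proof. by rewrite -[z]v2rK -Mx_mul submxMl. Qed.

Lemma sub_Cd al v : (v <= Cd al)%MS -> exists z, v = phi al z.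
Proof. by rewrite /Cd genmxE => /submxP [u ->]; exists (r2v u); rewrite Mx_mul. Qed.

Lemma phi_Cd al z : (phi al z <= Cd al)%MS.
Proof. by rewrite /Cd genmxE phi_sub. Qed.

Lemma Aentry i j : A i j = dd i * (j == ordS i)%:R.
Proof.
rewrite /Amat /Dmat mul_diag_mx !mxE /dd.
by congr (_ * _); rewrite -val_eqE /=; case: ifP.
Qed.

Lemma tau_sum (k : nat) (a : 'I_k -> F) (y : 'I_k -> L) :
  tau (\sum_i a i *: y i) = \sum_i a i * tau (y i).
Proof.
rewrite /tau linear_sum summxE; apply: eq_bigr => i _.
by rewrite linearZ mxE.
Qed.

Lemma pow_card1 (y : L) : y != 0 -> y ^+ #|L|.-1 = 1.
Proof.
move=> y0; apply: (mulfI y0); rewrite mulr1 -exprS prednK ?expf_card //.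
exact: ltnW (card_finNzRing_gt1 _).
Qed.

Section OneAl.
Variable (al : L).
Hypothesis (halc : al ^+ m.+1 = cc%:A).

Lemma al_neq0 : al != 0.
Proof.
apply/eqP => a0; move: halc; rewrite a0 expr0n /= => /esym /eqP.
by rewrite scaler_eq0 oner_eq0 orbF; apply/negP; apply: Dp_neq0.
Qed.

Lemma key (i : 'I_m.+1) z : tau (z * xx al i) * dd i = tau (z * al * xx al (ordS i)).
Proof.
rewrite mulrC -tauZ; congr tau.
have a0 := al_neq0.
rewrite -[dd i *: _]mulr_algl.
case: (ltnP i m) => [lt|ge].
  have -> : (ordS i : nat) = i.+1 by rewrite /= modn_small.
  by rewrite /xx /Dp big_ord_recr /= algM exprS fld1.
have im : (i : nat) = m by apply/eqP; rewrite eqn_leq -ltnS ltn_ord ge.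
have -> : (ordS i : nat) = 0%N by rewrite /= im modnn.
rewrite /xx {2}/Dp big_ord0 scale1r expr0 divr1 mulr1 im; apply: fld2; first by rewrite expf_neq0.
by rewrite -algM -exprS halc /cc /Dp big_ord_recr /= mulrC.
Qed.

Lemma xx0 : xx al 0 = 1.
Proof. by rewrite /xx /Dp big_ord0 scale1r expr0 divr1. Qed.

Lemma phiA z : phi al z *m A = phi al (z * al).
Proof.
apply/rowP => j; rewrite !mxE.
under eq_bigr => i _ do rewrite Aentry mulrA [phi al z 0 i]mxE key.
pose G (k : 'I_m.+1) := tau (z * al * xx al k) * (j == k)%:R.
rewrite -[RHS]/(tau (z * al * xx al j)).
transitivity (\sum_i G (ordS i)); first by [].
have -> : \sum_i G (ordS i) = \sum_i G i by rewrite [RHS](reindex_inj (@ordS_inj _)).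
rewrite /G (bigD1 j) //= eqxx mulr1 big1 ?addr0 //.
by move=> k nk; rewrite eq_sym (negPf nk) mulr0.
Qed.

Lemma phiAk z k : phi al z *m A ^+ k = phi al (z * al ^+ k).
Proof.
elim: k => [|k IH]; first by rewrite !expr0 mulr1 mulmx1.
by rewrite exprSr -mulmxE mulmxA IH phiA exprSr mulrA.
Qed.

Lemma Cd_inv : Ainvariant A (Cd al).
Proof.
rewrite /Ainvariant /Cd (eqmxMr _ (genmxE _)) genmxE.
by apply/row_subP => i; rewrite row_mul rowE Mx_mul phiA phi_sub.
Qed.

Lemma phiB x y : phi al (x - y) = phi al x - phi al y.
Proof. by rewrite addrC -scaleN1r phi_lin scaleN1r addrC. Qed.

Lemma phi_eq0 z : phi al z = 0 -> forall k, tau (z * al ^+ k) = 0.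
Proof.
move=> e k; have := phiAk z k; rewrite e mul0mx => /rowP/(_ 0).
by rewrite !mxE xx0 mulr1 => <-.
Qed.

Section Good.
Variable u : {unit L}.
Hypothesis hal : al = val u.
Hypothesis hu : #[u]%g = #|L|.-1.
Hypothesis cardL : #|L| = (#|F| ^ 2)%N.
Hypothesis dimL2 : dim L = 2%N.
Hypothesis hAN : A ^+ (#|L|.-1) = 1.

Lemma ordal k : al ^+ k = 1 -> (#|L|.-1 %| k)%N.
Proof.
rewrite hal -FinRing.val_unitX -(FinRing.val_unit1 L) => /val_inj /eqP.
by rewrite -order_dvdn hu.
Qed.

Lemma genal y : y != 0 -> exists k, y = al ^+ k.
Proof.
move=> y0; have yu : y \is a GRing.unit by rewrite unitfE.
have : (FinRing.unit L yu) \in <[u]>%g.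
  have -> : <[u]>%g = [set: {unit L}].
    apply/eqP; rewrite eqEcard subsetT /= cardsT -cardsT card_finField_unit.
    by rewrite -orderE hu.
  by rewrite inE.
case/cycleP => k e; exists k.
by rewrite hal -FinRing.val_unitX -e.
Qed.

Lemma phi_inj z : phi al z = 0 -> z = 0.
Proof.
move=> e; apply: tau_nondeg => w.
have [->|w0] := eqVneq w 0; first by rewrite mul0r tau0.
have [k ->] := genal _ w0.
by rewrite mulrC; apply: phi_eq0.
Qed.

Lemma rankCd : \rank (Cd al) = dim L.
Proof.
rewrite /Cd genmxE; apply/eqP; rewrite eqn_leq rank_leq_row /=.
have : kermx (Mx al) == 0.
  apply/rowV0P => v /sub_kermxP; rewrite Mx_mul => /phi_inj e.
  by rewrite -[v]r2vK e linear0.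
rewrite -mxrank_eq0 mxrank_ker subn_eq0; apply.
Qed.

Lemma algX (mu : F) k : (mu%:A : L) ^+ k = (mu ^+ k)%:A.
Proof. by elim: k => [|k IH]; rewrite ?expr0 ?scale1r // !exprS IH algM. Qed.

Lemma card_gt1 : (1 < #|F|)%N.
Proof. exact: card_finNzRing_gt1. Qed.

Lemma Cd_irr : Airreducible A (Cd al).
Proof.
split; first exact: Cd_inv.
move=> C' sub inv /andP [r1 r2].
have C'0 : C' != 0 by rewrite -mxrank_eq0 -lt0n.
have [v vC' v0] := rowV0Pn C'0.
have [z ez] := sub_Cd _ _ (submx_trans vC' sub).
have rv : \rank v = 1%N by rewrite rank_rV v0.
have C'v : (C' <= v)%MS.
  have := mxrank_leqif_sup vC'; rewrite rv => /leqifP.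
  case: ifP => // _; rewrite ltnNge => /negP; case.
  by move: r2; rewrite rankCd dimL2 ltnS.
have : (v *m A <= v)%MS by apply: submx_trans C'v; apply: submx_trans inv; apply: submxMr.
case/sub_rVP => mu; rewrite ez phiA -phiZ => /eqP; rewrite -subr_eq0 -phiB => /eqP /phi_inj.
move=> /eqP; rewrite subr_eq0 -mulr_algl => /eqP ez2.
have z0 : z != 0 by apply: contraNneq v0 => z0; rewrite ez z0 phi0.
have alm : al = mu%:A by apply: (mulfI z0); rewrite ez2 mulrC.
have mu0 : mu != 0 by apply: contraNneq (al_neq0) => m0; rewrite alm m0 scale0r.
have : al ^+ (#|F|.-1) = 1.
  have mq : mu ^+ #|F|.-1 = 1.
    apply: (mulfI mu0); rewrite mulr1 -exprS prednK ?expf_card //; exact: ltnW card_gt1.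
  by rewrite alm algX mq scale1r.
move/ordal; rewrite cardL => /dvdn_leq.
have q1 := card_gt1.
rewrite expnS expn1; move: q1; set q := #|F|; move=> q1 H; have : (0 < q.-1)%N by rewrite -ltnS prednK // ltnW.
move/H; nia.
Qed.

Lemma Cd_faithful : Afaithful A (Cd al).
Proof.
move=> k H.
have := H (phi al 1) (phi_Cd _ _); rewrite phiAk mul1r => /eqP.
rewrite -subr_eq0 -phiB => /eqP /phi_inj /eqP; rewrite subr_eq0 => /eqP /ordal.
by case/dvdnP => d ->; rewrite mulnC exprM hAN expr1n.
Qed.

End Good.

End OneAl.

Section Span.
Variable als : 'I_m.+1 -> L.
Hypothesis hals : forall j, als j ^+ m.+1 = cc%:A.
Hypothesis als_inj : injective als.

Lemma span_all : (1%:M <= \sum_j Cd (als j))%MS.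
Proof.
set S := (\sum_j Cd (als j))%MS.
rewrite sub1mx; apply/negPn/negP => nfull.
set K := cokermx S.
have K0 : K != 0.
  rewrite -mxrank_eq0 mxrank_coker subn_eq0 -ltnNge ltn_neqAle rank_leq_col andbT.
  exact: nfull.
have [k kw] : exists k, col k K != 0.
  apply/existsP; apply: contraR K0 => /existsPn H; apply/eqP/matrixP => i k.
  by move: (H k) => /negPn /eqP /colP /(_ i); rewrite !mxE.
pose w : 'cV[F]_m.+1 := K *m delta_mx k 0.
have w0 : w != 0 by rewrite /w -colE.
have Sw : S *m w = 0 by rewrite /w mulmxA mulmx_coker mul0mx.
have Y0 : forall j, \sum_(i < m.+1) w i 0 *: xx (als j) i = 0.
  move=> j; apply: tau_nondeg => z.
  have : phi (als j) z *m w = 0.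
    have : (phi (als j) z <= S)%MS by apply: (sumsmx_sup j) => //; apply: phi_Cd.
    by case/submxP => D ->; rewrite -mulmxA Sw mulmx0.
  move/matrixP/(_ 0 0); rewrite !mxE => <-.
  rewrite mulr_sumr. under eq_bigr => i _ do rewrite -scalerAr. rewrite tau_sum; apply: eq_bigr => i _.
  by rewrite mulrC [phi (als j) z 0 i]mxE.
pose Q : {poly L} := \poly_(i < m.+1) ((w (inord i) 0 * Dp i)%:A).
have rootQ : forall j, root Q (als j)^-1.
  move=> j; rewrite /root horner_poly; apply/eqP; rewrite -[RHS](Y0 j); apply: eq_bigr => i _.
  rewrite inord_val algM -mulrA mulr_algl /xx; congr (_ *: _).
  by rewrite exprVn.
have Q0 : Q = 0.
  apply/eqP; apply/negPn/negP => Qn.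
  have := max_poly_roots Qn (rs := [seq (als j)^-1 | j <- enum 'I_m.+1]).
  rewrite size_map size_enum_ord.
  have -> : all (root Q) [seq (als j)^-1 | j <- enum 'I_m.+1].
    by apply/allP => x /mapP [j _ ->]; apply: rootQ.
  rewrite map_inj_uniq ?enum_uniq; last by move=> a b /invr_inj /als_inj.
  by move=> /(_ isT isT); rewrite ltnNge size_poly.
move: w0; apply/negP; rewrite negbK; apply/eqP/matrixP => i j.
rewrite (ord1 j).
have := congr1 (fun p : {poly L} => p`_i) Q0; rewrite coef_poly ltn_ord coef0 inord_val.
move/eqP; rewrite scaler_eq0 oner_eq0 orbF mulf_eq0 (negPf (Dp_neq0 _)) orbF.
by move/eqP; rewrite mxE => ->; rewrite mxE.
Qed.

Lemma AN : A ^+ (#|L|.-1) = 1.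
Proof.
have sp := span_all.
have H : forall v : 'rV[F]_m.+1, (v <= \sum_j Cd (als j))%MS -> v *m A ^+ #|L|.-1 = v.
  move=> v /sub_sumsmxP [u_ ->]; rewrite mulmx_suml; apply: eq_bigr => j _.
  have [z ez] := sub_Cd _ _ (submxMl (u_ j) (Cd (als j))).
  by rewrite ez phiAk // pow_card1 ?mulr1 // al_neq0.
apply/row_matrixP => i; rewrite row1 rowE; apply: H.
by apply: submx_trans sp; rewrite -row1 row_sub.
Qed.

End Span.

End Codes.

Lemma cap_inv (K : fieldType) (m : nat) (A X Y : 'M[K]_m.+1) :
  Ainvariant A X -> Ainvariant A Y -> Ainvariant A (X :&: Y)%MS.
Proof.
rewrite /Ainvariant => hX hY; rewrite sub_capmx; apply/andP; split.
  exact: submx_trans (submxMr _ (capmxSl _ _)) hX.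
exact: submx_trans (submxMr _ (capmxSr _ _)) hY.
Qed.

Lemma sum_inv (K : fieldType) (m k : nat) (A : 'M[K]_m.+1) (W : 'I_k -> 'M[K]_m.+1)
  (hW : forall i, Ainvariant A (W i)) (r : seq 'I_k) :
  Ainvariant A (\sum_(i <- r) W i)%MS.
Proof.
rewrite /Ainvariant; elim: r => [|i r IH]; first by rewrite big_nil mul0mx sub0mx.
by rewrite big_cons addsmxMr addsmxS // hW.
Qed.

Lemma greedy (K : fieldType) (m k : nat) (A : 'M[K]_m.+1) (W : 'I_k -> 'M[K]_m.+1)
  (hW : forall i, \rank (W i) = 2%N /\ Airreducible A (W i)) (s : seq 'I_k) :
  exists J : seq 'I_k,
    \rank (\sum_(i <- J) W i)%MS = (2 * size J)%N /\
    ((\sum_(i <- J) W i) == (\sum_(i <- s) W i))%MS.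
Proof.
elim: s => [|i s [J [rJ eJ]]]; first by exists [::]; rewrite !big_nil mxrank0 submx_refl.
set S' := (\sum_(j <- J) W j)%MS.
have invS' : Ainvariant A S' by apply: sum_inv => j; case: (hW j) => _ [].
have [rWi [invWi irrWi]] := hW i.
have capinv := @cap_inv _ _ _ _ _ invWi invS'.
have := irrWi _ (capmxSl _ _) capinv.
rewrite rWi.
have [c0|cpos] := eqVneq (\rank (W i :&: S')%MS) 0%N.
  move=> _; exists (i :: J); split.
    have := mxrank_sum_cap (W i) S'; rewrite c0 addn0 rWi rJ big_cons /= => ->.
    by rewrite mulnS.
  rewrite !big_cons; apply/eqmxP; apply: adds_eqmx => //; exact/eqmxP.
move=> H; exists J; split => //.
have WiS : (W i <= S')%MS.
  apply: submx_trans (capmxSr (W i) S').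
  have := mxrank_leqif_sup (capmxSl (W i) S'); rewrite rWi => /leqifP.
  case: ifP => // _ lt; case: H; rewrite lt0n cpos /=; exact: lt.
rewrite big_cons; apply/eqmxP.
have e1 := eqmxP eJ.
apply: eqmx_trans e1 _; apply/eqmx_sym/addsmx_idPr.
by rewrite -(eqmxP eJ).
Qed.

Lemma uval_neq0 (F : finFieldType) (u : {unit F}) : val u != 0.
Proof. by apply/eqP => e; have := valP u; rewrite e unitr0. Qed.

Lemma uord (F : finFieldType) (u : {unit F}) k : (val u ^+ k == 1) = (#[u]%g %| k)%N.
Proof.
by rewrite order_dvdn -FinRing.val_unitX -(FinRing.val_unit1 F) val_eqE.
Qed.

Lemma cc_val (F : finFieldType) (eta lam : F) :
  cc F #|F| eta lam = eta * lam ^+ 2.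
Proof.
have q1 : (1 < #|F|)%N := card_finNzRing_gt1 F.
have eE := expf_card eta; have lE := expf_card lam.
move: q1 eE lE; case: #|F| => [//|[//|q]] _ eE lE.
rewrite /cc /Dp big_ord_recl big_ord_recl.
have -> : \prod_(i < q.+1) dd F eta lam (bump 0 (bump 0 i)) = (eta * lam) ^+ q.+1.
  rewrite -[in RHS](card_ord q.+1) -prodr_const; apply: eq_bigr => i _.
  by rewrite /dd.
rewrite /dd /=.
rewrite mulrCA -exprS exprMn eE lE; ring.
Qed.

Lemma cc_ord (F : finFieldType) (eta lam : {unit F}) (heta : (2%N).-nat #[eta]%g)
  (hlam : odd #[lam]%g) (hgen : (<<[set eta; lam]>> = [set: {unit F}])%g) k :
  (val eta * val lam ^+ 2) ^+ k = 1 -> (#|F|.-1 %| k)%N.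
Proof.
set a := #[eta]%g; set b := #[lam]%g.
have cab : coprime a b.
  have -> : a = (2 ^ logn 2 a)%N by rewrite -p_part part_pnat_id.
  by rewrite coprimeXl // coprime2n.
have Ea : val eta ^+ a = 1 by apply/eqP; rewrite uord.
have Lb : val lam ^+ b = 1 by apply/eqP; rewrite uord.
move=> e.
have ha : (a %| k)%N.
  rewrite -(Gauss_dvdr _ cab) -uord mulnC.
  have : (val eta * val lam ^+ 2) ^+ (k * b) = 1 by rewrite exprM e expr1n.
  rewrite exprMn -exprM.
  have -> : (2 * (k * b) = b * (2 * k))%N by nia.
  by rewrite (exprM (val lam) b) Lb expr1n mulr1 => ->.
have hb : (b %| k)%N.
  have cb2a : coprime b (2 * a) by rewrite coprimeMr coprime_sym coprime2n hlam coprime_sym.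
  rewrite -(Gauss_dvdr _ cb2a) -uord.
  have : (val eta * val lam ^+ 2) ^+ (k * a) = 1 by rewrite exprM e expr1n.
  rewrite exprMn -exprM.
  have -> : (k * a = a * k)%N by nia.
  rewrite (exprM (val eta) a) Ea expr1n mul1r.
  have -> : (2 * (a * k) = 2 * a * k)%N by nia.
  by move=> ->.
have hab : (a * b %| k)%N by rewrite Gauss_dvd // ha hb.
apply: dvdn_trans hab.
rewrite -card_finField_unit.
have cyc : cyclic [set: {unit F}]%G by apply: field_unit_group_cyclic.
rewrite -(exponent_cyclic cyc) /= -hgen abelian_exponent_gen; last first.
  by apply: abelianS (subsetT _) (cyclic_abelian cyc).
apply/exponentP => x; rewrite !inE => /orP [] /eqP ->.
  by rewrite expgM expg_order expg1n.
by rewrite mulnC expgM expg_order expg1n.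
Qed.

Local Open Scope nat_scope.

Lemma cop_qm1 q mm j : coprime mm q.-1 -> coprime (mm + j * q.-1) q.-1.
Proof. by move=> c; rewrite coprime_sym addnC /coprime gcdnMDl -/(coprime _ _) coprime_sym. Qed.

Lemma odd_mm q mm : ~~ odd q.-1 -> coprime mm q.-1 -> odd mm.
Proof.
move=> ev c; apply: contraT => em.
have d2 : 2 %| gcdn mm q.-1 by rewrite dvdn_gcd !dvdn2 em ev.
by move: c; rewrite /coprime => /eqP c; rewrite c in d2.
Qed.

Lemma cop_odd_pow2 e k : odd e -> coprime e (2 ^ k).
Proof.
move=> oe; case: k => [|k]; first by rewrite expn0 coprimen1.
by rewrite coprime_pexpr // coprime_sym coprime2n.
Qed.

Lemma NT1 q mm s r t : 1 < q -> coprime mm q.-1 -> prime r -> odd r ->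
  q.+1 = 2 ^ s * r ^ t ->
  exists2 j, j < 2 & coprime (mm + j * q.-1) (q.-1 * q.+1).
Proof.
move=> q1 c pr ro hq.
have c2 : forall j, coprime (mm + j * q.-1) (2 ^ s).
  move=> j; case: s hq => [|s] hq; first by rewrite expn0 coprimen1.
  apply: cop_odd_pow2.
  have evq1 : ~~ odd q.-1.
    have oq : odd q.+1 = false by rewrite hq oddM oddX /=.
    by rewrite -(prednK (ltnW q1)) /= negbK in oq; rewrite oq.
  by rewrite oddD (odd_mm _ _ evq1 c) oddM (negPf evq1) andbF.
case: t hq => [|t] hq.
  exists 0 => //; rewrite coprimeMr cop_qm1 // hq expn0 muln1 andTb; apply: c2.
have rq1 : r %| q.+1 by rewrite hq dvdn_mull // dvdn_exp.
have nrq : ~~ (r %| q.-1).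
  apply/negP => rq.
  have : r %| 2.
    have -> : 2 = q.+1 - q.-1 by lia.
    by rewrite dvdn_sub.
  rewrite dvdn_prime2 // => /eqP r2; by rewrite r2 in ro.
have cr : forall j, ~~ (r %| mm + j * q.-1) -> coprime (mm + j * q.-1) (q.-1 * q.+1).
  move=> j nre; rewrite coprimeMr cop_qm1 // hq coprimeMr c2 andTb coprime_pexpr //.
  by rewrite coprime_sym prime_coprime.
case: (boolP (r %| mm)) => rm.
  exists 1 => //; apply: cr; rewrite mul1n; apply: contra nrq.
  by rewrite (dvdn_addr _ rm).
by exists 0 => //; apply: cr; rewrite mul0n addn0.
Qed.

Lemma NT2 q mm k : prime q -> q = 2 ^ k - 1 -> coprime mm q.-1 ->
  forall j, coprime (mm + j * q.-1) (q.-1 * q.+1).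
Proof.
move=> pq qk c j.
have q1 : 1 < q by apply: prime_gt1.
have k2 : 1 < k.
  by case: k qk => [|[|k]] qk //; rewrite qk in pq.
have hq : q.+1 = 2 ^ k.
  rewrite qk; have : 0 < 2 ^ k by rewrite expn_gt0.
  lia.
have evq1 : ~~ odd q.-1.
  have oq : odd q.+1 = false by rewrite hq oddX /=; by case: (k) k2.
  by rewrite -(prednK (ltnW q1)) /= negbK in oq; rewrite oq.
rewrite coprimeMr cop_qm1 // hq; apply: cop_odd_pow2.
by rewrite oddD (odd_mm _ _ evq1 c) oddM (negPf evq1) andbF.
Qed.

Local Open Scope ring_scope.

Lemma ex_j0 (F : finFieldType) (h : {poly F}) (hI : monic_irreducible_poly h) :
  exists j0, v2r (1 : {poly %/ h with hI}) 0 j0 != 0.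
Proof.
apply/existsP; rewrite -negb_forall; apply/negP => /forallP H.
have : v2r (1 : {poly %/ h with hI}) = 0 by apply/rowP => j; rewrite mxE; apply/eqP/H.
rewrite -(linear0 (v2r : {poly %/ h with hI} -> _)) => /v2r_inj /eqP; by rewrite oner_eq0.
Qed.

Lemma dimL2 (F : finFieldType) (h : {poly F}) (hI : monic_irreducible_poly h) :
  size h = 3%N -> dim {poly %/ h with hI} = 2%N.
Proof.
move=> sh; rewrite -dimvf.
by rewrite (dim_polyn F (size (mk_monic h)).-1) (mk_monicE hI) sh.
Qed.

Lemma algXn (K : fieldType) (L : lalgType K) (a : K) k : (a%:A : L) ^+ k = (a ^+ k)%:A.
Proof.
elim: k => [|k IH]; first by rewrite !expr0 scale1r.
by rewrite !exprS IH mulr_algl scalerA.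
Qed.

Lemma alg_inj1 (K : fieldType) (L : lalgType K) (a : K) : (1 : L) != 0 -> (a%:A : L) = 1 -> a = 1.
Proof.
move=> L1 /eqP; rewrite -[X in _ == X]scale1r -subr_eq0 -scalerBl scaler_eq0 (negPf L1) orbF.
by rewrite subr_eq0 => /eqP.
Qed.

Theorem theorem5p3 (F : finFieldType) (p f : nat) (hp : prime p) (hf : (0 < f)%N)
  (hq : #|F| = (p ^ f)%N)
  (eta lam : {unit F})
  (heta : (2%N).-nat #[eta]%g) (hlam : odd #[lam]%g)
  (hgen : (<<[set eta; lam]>> = [set: {unit F}])%g)
  (s r t : nat) (hr : prime r) (hrodd : odd r)
  (hn : (#|F|).+1 = (2 ^ s * r ^ t)%N) :
  let A := Amat #|F| (val eta) (val lam) in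
  (exists C : 'M[F]_(#|F|.+1),
     \rank C = 2%N /\ Airreducible A C /\ Afaithful A C) /\
  (mersenne_prime #|F| ->
   exists (k : nat) (Cs : 'I_k -> 'M[F]_(#|F|.+1)),
     (forall i, \rank (Cs i) = 2%N /\ Airreducible A (Cs i) /\ Afaithful A (Cs i)) /\
     mxdirect (\sum_(i < k) Cs i) /\
     (1%:M <= \sum_(i < k) Cs i)%MS).
Proof.
move=> A.
have [h [hirr hmon sh]] := exists_irr2 F.
pose hI : monic_irreducible_poly h := (hirr, hmon).
have cardL : #|{poly %/ h with hI}| = (#|F| ^ 2)%N by rewrite card_qfpoly sh.
have dL := @dimL2 _ _ hI sh.
have [j0 hj0] := @ex_j0 _ _ hI.
have q1 : (1 < #|F|)%N := card_finNzRing_gt1 F.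
have eta0 := @uval_neq0 _ eta; have lam0 := @uval_neq0 _ lam.
have ccv := @cc_val _ (val eta) (val lam).
have ccord := @cc_ord _ _ _ heta hlam hgen.
move: ccv ccord cardL dL q1 hj0 hn.
rewrite /A; set q := #|F|; set E := val eta; set Lm := val lam.
move=> ccv ccord cardL dL q1 hj0 hn {A}.
set N := #|{poly %/ h with hI}|.-1.
have NE : N = (q.-1 * q.+1)%N.
  rewrite /N cardL; move: q1; clear; case: q => [//|q] _ /=; nia.
have cycL : cyclic [set: {unit {poly %/ h with hI}}]%G by apply: field_unit_group_cyclic.
have [g hg] := cyclicP cycL.
have og : #[g]%g = N by rewrite orderE -hg card_finField_unit.
set c := cc F q E Lm.
have c0 : c != 0 by rewrite /c ccv mulf_neq0 // expf_neq0.
have cA0 : (c%:A : {poly %/ h with hI}) != 0 by rewrite scaler_eq0 (negPf c0) oner_eq0.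
have cU : (c%:A : {poly %/ h with hI}) \is a GRing.unit by rewrite unitfE.
have [e0 he0] : exists e0, c%:A = val (g ^+ e0)%g.
  have : FinRing.unit _ cU \in <[g]>%g by rewrite -hg inE.
  by case/cycleP => e0 he; exists e0; rewrite -he.
have qm0 : (0 < q.-1)%N by move: q1; case: (q) => [|[|n]].
have cq : c ^+ q.-1 = 1.
  by apply: (mulfI c0); rewrite mulr1 -exprS prednK ?expf_card // ltnW.
have qdiv : (q.+1 %| e0)%N.
  have : val g ^+ (e0 * q.-1) = 1 by rewrite exprM -FinRing.val_unitX -he0 algXn cq scale1r.
  move/eqP; rewrite uord og NE mulnC.
  by rewrite dvdn_pmul2r.
case/dvdnP: qdiv => mm emm.
have cop_mm : coprime mm q.-1.
  set d := gcdn mm q.-1.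
  have d0 : (0 < d)%N by rewrite gcdn_gt0 qm0 orbT.
  have dm : (d %| mm)%N := dvdn_gcdl _ _.
  have dq : (d %| q.-1)%N := dvdn_gcdr _ _.
  set k := (q.-1 %/ d)%N.
  have Hm : mm = (mm %/ d * d)%N by rewrite divnK.
  have Hq : q.-1 = (k * d)%N by rewrite divnK.
  have k0 : (0 < k)%N by move: qm0; rewrite Hq muln_gt0 => /andP[].
  have ck : c ^+ k = 1.
    apply: (@alg_inj1 _ {poly %/ h with hI}); first by rewrite oner_eq0.
    rewrite -algXn he0 -FinRing.val_unitX -expgM emm.
    have -> : (mm * q.+1 * k = mm %/ d * N)%N.
      rewrite NE {1}Hm Hq; ring.
    by rewrite mulnC expgM -og expg_order expg1n.
  have := ccord k; rewrite -ccv -/c ck => /(_ erefl) kd.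
  have := dvdn_leq k0 kd; rewrite /coprime -/d {1}Hq => le.
  rewrite -[X in (_ <= X)%N]muln1 leq_pmul2l // in le.
  by apply/eqP/anti_leq; rewrite le d0.
pose als (j : 'I_q.+1) := val (g ^+ (mm + j * q.-1))%g.
have hals : forall j, als j ^+ q.+1 = c%:A.
  move=> j; rewrite he0 -FinRing.val_unitX -expgM; congr val; apply/eqP.
  rewrite eq_expg_mod_order og NE emm.
  have -> : ((mm + j * q.-1) * q.+1 = j * (q.-1 * q.+1) + mm * q.+1)%N by ring.
  by rewrite modnMDl.
have als_inj : injective als.
  move=> i j /val_inj /eqP; rewrite eq_expg_mod_order og NE eqn_modDl.
  rewrite [(q.-1 * q.+1)%N]mulnC -!muln_modl eqn_pmul2r // !modn_small //.
  by move=> /eqP e; apply: val_inj.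
have hAN : Amat q E Lm ^+ N = 1 := @AN _ _ hI q E Lm eta0 lam0 j0 hj0 als hals als_inj.
have good : forall j : 'I_q.+1, coprime (mm + j * q.-1) N ->
    \rank (Cd F h hI q E Lm j0 (als j)) = 2%N /\
    Airreducible (Amat q E Lm) (Cd F h hI q E Lm j0 (als j)) /\
    Afaithful (Amat q E Lm) (Cd F h hI q E Lm j0 (als j)).
  move=> j cop.
  have hu : #[(g ^+ (mm + j * q.-1))%g]%g = N.
    by rewrite orderXgcd og gcdnC (eqP cop) divn1.
  split; first by rewrite (@rankCd _ _ hI q E Lm eta0 lam0 j0 hj0 (als j) (hals j) _ erefl hu).
  split; first exact: (@Cd_irr _ _ hI q E Lm eta0 lam0 j0 hj0 (als j) (hals j) _ erefl hu cardL dL).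
  exact: (@Cd_faithful _ _ hI q E Lm eta0 lam0 j0 hj0 (als j) (hals j) _ erefl hu hAN).
split.
  have [j jl cop] := @NT1 _ _ _ _ _ q1 cop_mm hr hrodd hn.
  pose jj : 'I_q.+1 := Ordinal (leq_trans jl (leqW q1)).
  exists (Cd F h hI q E Lm j0 (als jj)); apply: good; rewrite NE; exact: cop.
move=> [pq [k qk]].
have allgood : forall j : 'I_q.+1, coprime (mm + j * q.-1) N.
  by move=> j; rewrite NE; apply: (@NT2 _ _ _ pq qk cop_mm).
pose W (j : 'I_q.+1) := Cd F h hI q E Lm j0 (als j).
have hW : forall j, \rank (W j) = 2%N /\ Airreducible (Amat q E Lm) (W j).
  by move=> j; have [? [? _]] := good j (allgood j).
have [J [rJ eJ]] := @greedy _ _ _ _ _ hW (index_enum 'I_q.+1).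
exists (size J), (fun i => W (nth ord0 J i)).
have eqsum : (\sum_(i < size J) W (nth ord0 J i))%MS = (\sum_(j <- J) W j)%MS.
  by rewrite (big_nth ord0) big_mkord.
split; first by move=> i; apply: good.
split.
  rewrite mxdirectE /= eqsum rJ.
  under eq_bigr => i _ do rewrite (good _ (allgood _)).1.
  by rewrite sum_nat_const card_ord mulnC.
rewrite eqsum (eqmxP eJ).
exact: (@span_all _ _ hI q E Lm eta0 lam0 j0 hj0 als als_inj).
Qed.
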